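(* Consider the MT-model on $\mathbb{T}_2$ and let $$R:=\max\{n\ge1:\ \eta_t(x)=1 \text{ for some } x\in\partial\mathbb{T}_{2,n} \text{ and some } t\in\mathbb{R}_+\}$$ be the range of spreading. Define $$\alpha_1(n):=\frac{(13/9)\{1-(8/9)^n\}}{13/9-(8/9)^n},\qquad \alpha_2(n):=\frac{(4/3)\{1-(8/9)^n\}}{4/3-(8/9)^n}.$$ Then for every $n\ge0$, $$\tfrac{3}{9}\alpha_1(n)+\tfrac49\alpha_1(n)^2+\tfrac29\alpha_1(n)^3\ \le\ \mathbb{P}(R\le n)\ \le\ \tfrac39\alpha_2(n)+\tfrac49\alpha_2(n)^2+\tfrac29\alpha_2(n)^3.$$ Moreover, $6.144\le\mathbb{E}(R)\le 7.448$.
   Context: $\mathbb{T}_2$ is the infinite tree in which every vertex has degree $3$, with root $\mathbf 0$; $\partial\mathbb{T}_{2,n}$ is the set of vertices at graph distance $n$ from $\mathbf 0$. The MT-model on $\mathbb{T}_2$ is the continuous-time Markov process $(\eta_t)_{t\ge0}$ on $\{-1,0,1\}^{\mathbb{T}_2}$ ($-1$ = ignorant, $0$ = spreader, $1$ = stifler) in which a vertex in state $-1$ jumps to $0$ at rate equal to its number of neighbours in state $0$, and a vertex in state $0$ jumps to $1$ at rate equal to its number of neighbours in states $\{0,1\}$ (equivalently, each spreader contacts each neighbour at rate 1, informing ignorants and becoming a stifler upon contacting a non-ignorant). Initially $\eta_0(\mathbf 0)=0$ and all other vertices are in state $-1$. *)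

(* Defs.v *)
From Stdlib Require Import Reals List Arith ZArith Lra.
From Coquelicot Require Import Coquelicot.
Import ListNotations.
Open Scope R_scope.

(** A vertex is the word of moves from the root: the root is [[]];
    [a :: w] with [a < 3] selects one of the 3 neighbours of the root and each
    further letter ([< 2]) selects one of the two children.  Only such words are
    ever reached from the root through [nbrs]. *)
Definition vertex := list nat.
Definition root : vertex := [].
Definition veq_dec : forall x y : vertex, {x = y} + {x <> y} :=
  list_eq_dec Nat.eq_dec.

Definition children (v : vertex) : list vertex :=
  match v with
  | [] => [[0%nat]; [1%nat]; [2%nat]]
  | _ => [v ++ [0%nat]; v ++ [1%nat]]
  end.
Definition parent (v : vertex) : list vertex :=
  match v with [] => [] | _ => [removelast v] end.
Definition nbrs (v : vertex) : list vertex := parent v ++ children v.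
(** graph distance from the root: x is in \partial T_{2,n} iff depth x = n *)
Definition depth (v : vertex) : nat := length v.

(** * Configurations of the MT-model with finitely many non-ignorant sites.
    [eta c x] is -1 (ignorant), 0 (spreader) or 1 (stifler). *)
Record config := mkConfig { spreaders : list vertex; stiflers : list vertex }.

Definition eta (c : config) (x : vertex) : Z :=
  if in_dec veq_dec x (spreaders c) then 0%Z
  else if in_dec veq_dec x (stiflers c) then 1%Z else (-1)%Z.

Definition count_nbrs (P : Z -> bool) (c : config) (x : vertex) : nat :=
  length (filter (fun y => P (eta c y)) (nbrs x)).

Definition rate (c : config) (x : vertex) : nat :=
  match eta c x with
  | (-1)%Z => count_nbrs (fun s => Z.eqb s 0) c x
  | 0%Z => count_nbrs (fun s => orb (Z.eqb s 0) (Z.eqb s 1)) c x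
  | _ => 0%nat
  end.

Definition flip (c : config) (x : vertex) : config :=
  match eta c x with
  | (-1)%Z => mkConfig (x :: spreaders c) (stiflers c)
  | 0%Z => mkConfig (remove veq_dec x (spreaders c)) (x :: stiflers c)
  | _ => c
  end.

(** all sites that can have positive rate: spreaders and their neighbours *)
Definition candidates (c : config) : list vertex :=
  nodup veq_dec (spreaders c ++ flat_map nbrs (spreaders c)).

Definition total_rate (c : config) : nat :=
  fold_right (fun x acc => (rate c x + acc)%nat) 0%nat (candidates c).

Definition init : config := mkConfig [root] [].

Definition good (n : nat) (c : config) : bool :=
  forallb (fun x => Nat.leb (depth x) n) (stiflers c).

(** [q k n c] = probability, for the embedded jump chain of the MT-model
    started from c (site x flips with probability rate x / total rate; the
    chain is absorbed when the total rate is 0), that the configurations at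
    jumps 0..k are all [good n]. *)
Fixpoint q (k n : nat) (c : config) : R :=
  if good n c then
    match k with
    | O => 1
    | S k' =>
        if Nat.eqb (total_rate c) 0 then 1
        else fold_right
               (fun x acc => INR (rate c x) / INR (total_rate c) * q k' n (flip c x) + acc)
               0 (candidates c)
    end
  else 0.

(** P(R <= n) = P(no site at distance > n is ever a stifler)
    = lim_k q k n init  (decreasing limit). *)
Definition P_R_le (n : nat) : R := real (Lim_seq (fun k => q k n init)).

Definition P_R_eq (n : nat) : R :=
  match n with O => P_R_le O | S m => P_R_le (S m) - P_R_le m end.

Definition P_R_finite : R := real (Lim_seq P_R_le).

Definition alpha1 (n : nat) : R :=
  (13/9) * (1 - (8/9) ^ n) / (13/9 - (8/9) ^ n).
Definition alpha2 (n : nat) : R :=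
  (4/3) * (1 - (8/9) ^ n) / (4/3 - (8/9) ^ n).

(* Main.v *)
Require Import Defs.
From Stdlib Require Import Reals List Arith ZArith Lra Lia Permutation.
From Coquelicot Require Import Coquelicot.
Import ListNotations.
Open Scope R_scope.

Definition sumR {A} (l : list A) (f : A -> R) : R :=
  fold_right (fun x acc => f x + acc) 0 l.
Definition prodR {A} (l : list A) (f : A -> R) : R :=
  fold_right (fun x acc => f x * acc) 1 l.

Lemma sumR_app {A} (l1 l2 : list A) f : sumR (l1 ++ l2) f = sumR l1 f + sumR l2 f.
Proof. induction l1; simpl; [lra|rewrite IHl1; lra]. Qed.

Lemma sumR_ext_in {A} (l : list A) f g :
  (forall x, In x l -> f x = g x) -> sumR l f = sumR l g.
Proof. induction l; simpl; intros H; auto. rewrite H, IHl; auto. Qed.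

Lemma sumR_le_in {A} (l : list A) f g :
  (forall x, In x l -> f x <= g x) -> sumR l f <= sumR l g.
Proof. induction l; simpl; intros H; [lra|]. specialize (IHl (fun x h => H x (or_intror h))). specialize (H a (or_introl eq_refl)). lra. Qed.

Lemma sumR_plus {A} (l : list A) f g : sumR l (fun x => f x + g x) = sumR l f + sumR l g.
Proof. induction l; simpl; [lra|rewrite IHl; lra]. Qed.

Lemma sumR_scal {A} (l : list A) c f : sumR l (fun x => c * f x) = c * sumR l f.
Proof. induction l; simpl; [lra|rewrite IHl; lra]. Qed.

Lemma sumR_const {A} (l : list A) c : sumR l (fun _ => c) = INR (length l) * c.
Proof. induction l; simpl length; [simpl; lra|]. rewrite S_INR; simpl; rewrite IHl; lra. Qed.

Lemma sumR_flat_map {A B} (l : list A) (h : A -> list B) f :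
  sumR (flat_map h l) f = sumR l (fun x => sumR (h x) f).
Proof. induction l; simpl; auto. rewrite sumR_app, IHl; auto. Qed.

Lemma sumR_perm {A} (l1 l2 : list A) f : Permutation l1 l2 -> sumR l1 f = sumR l2 f.
Proof. induction 1; simpl; try lra. Qed.

Lemma sumR_filter {A} (P : A -> bool) (l : list A) f :
  (forall x, P x = false -> f x = 0) -> sumR l f = sumR (filter P l) f.
Proof. intros H; induction l; simpl; auto. destruct (P a) eqn:E; simpl; rewrite IHl; auto. rewrite H; auto; lra. Qed.

Lemma sumR_support {A} (P : A -> bool) (l1 l2 : list A) f :
  NoDup l1 -> NoDup l2 ->
  (forall x, P x = false -> f x = 0) ->
  (forall x, P x = true -> (In x l1 <-> In x l2)) ->
  sumR l1 f = sumR l2 f.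
Proof.
  intros N1 N2 H0 H1. rewrite (sumR_filter P l1), (sumR_filter P l2); auto.
  apply sumR_perm, NoDup_Permutation; try apply NoDup_filter; auto.
  intros x; rewrite !filter_In. split; intros [Hi Hp]; split; auto; apply (H1 x Hp); auto.
Qed.

Lemma prodR_ext_in {A} (l : list A) f g :
  (forall x, In x l -> f x = g x) -> prodR l f = prodR l g.
Proof. induction l; simpl; intros H; auto. rewrite H, IHl; auto. Qed.

Lemma prodR_remove (l : list vertex) s f : NoDup l -> In s l ->
  prodR l f = f s * prodR (remove veq_dec s l) f.
Proof.
  induction l as [|a l IH]; simpl; intros N I; [tauto|].
  inversion N; subst. destruct (veq_dec s a) as [->|ne].
  - rewrite notin_remove; auto.
  - destruct I as [->|I]; [congruence|]. simpl. rewrite IH; auto. lra.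
Qed.

Lemma sumR_remove (l : list vertex) s f : NoDup l -> In s l ->
  sumR l f = f s + sumR (remove veq_dec s l) f.
Proof.
  induction l as [|a l IH]; simpl; intros N I; [tauto|].
  inversion N; subst. destruct (veq_dec s a) as [->|ne].
  - rewrite notin_remove; auto.
  - destruct I as [->|I]; [congruence|]. simpl. rewrite IH; auto. lra.
Qed.

Lemma prodR_bounds {A} (l : list A) f : (forall x, In x l -> 0 <= f x <= 1) -> 0 <= prodR l f <= 1.
Proof. induction l; simpl; intros H; [lra|]. specialize (IHl (fun x h => H x (or_intror h))). specialize (H a (or_introl eq_refl)). nra. Qed.

Lemma sumR_nonneg {A} (l : list A) f : (forall x, In x l -> 0 <= f x) -> 0 <= sumR l f.
Proof. induction l; simpl; intros H; [lra|]. specialize (IHl (fun x h => H x (or_intror h))). specialize (H a (or_introl eq_refl)). lra. Qed.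

Definition inf (c : config) (x : vertex) : Prop := In x (spreaders c) \/ In x (stiflers c).

Record Inv (c : config) : Prop := {
  inv_ndS : NoDup (spreaders c);
  inv_ndT : NoDup (stiflers c);
  inv_dis : forall x, In x (spreaders c) -> ~ In x (stiflers c);
  inv_root : inf c root;
  inv_par : forall x, inf c x -> x <> [] -> inf c (removelast x) }.

Lemma eta_S c x : In x (spreaders c) -> eta c x = 0%Z.
Proof. unfold eta; destruct in_dec; tauto. Qed.
Lemma eta_T c x : ~ In x (spreaders c) -> In x (stiflers c) -> eta c x = 1%Z.
Proof. unfold eta; destruct in_dec; [tauto|]; destruct in_dec; tauto. Qed.
Lemma eta_I c x : ~ inf c x -> eta c x = (-1)%Z.
Proof. unfold inf, eta; destruct in_dec; [tauto|]; destruct in_dec; tauto. Qed.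
Lemma eta_ign c x : Z.eqb (eta c x) (-1) = true <-> ~ inf c x.
Proof. unfold inf, eta; destruct in_dec; [|destruct in_dec]; simpl; intuition; discriminate. Qed.

Definition ign_nbrs (c : config) (s : vertex) : list vertex :=
  filter (fun y => Z.eqb (eta c y) (-1)) (nbrs s).
Definition icount c s : nat := length (ign_nbrs c s).

Lemma nbrs_len v : length (nbrs v) = 3%nat.
Proof. destruct v; reflexivity. Qed.

Lemma children_spec s y : In y (children s) ->
  y <> [] /\ removelast y = s /\ depth y = S (depth s).
Proof.
  unfold depth. destruct s as [|a s]; intros H.
  - simpl in H. intuition subst; simpl; auto; discriminate.
  - unfold children in H. destruct H as [<-|[<-|[]]]; (split; [destruct s; discriminate|]);
    rewrite removelast_last, length_app; simpl; split; auto; lia.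
Qed.

Lemma nbrs_nonroot y : y <> [] -> nbrs y = removelast y :: children y.
Proof. destruct y; [congruence|reflexivity]. Qed.

Lemma child_neq y z : In z (children y) -> z <> y.
Proof. intros H ->. apply children_spec in H. unfold depth in H. lia. Qed.

Lemma len_rl (v : vertex) : v <> [] -> S (length (removelast v)) = length v.
Proof. intros H. pose proof (app_removelast_last 0%nat H) as E.
  apply (f_equal (@length nat)) in E. rewrite length_app in E. simpl in E. lia. Qed.

Lemma nbrs_nonroot' v : v <> [] -> nbrs v = [removelast v; v ++ [0%nat]; v ++ [1%nat]].
Proof. destruct v; [congruence|reflexivity]. Qed.

Lemma NoDup_nbrs v : NoDup (nbrs v).
Proof.
  destruct (list_eq_dec Nat.eq_dec v []) as [->|nv].
  - simpl. repeat constructor; simpl; intuition discriminate.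
  - rewrite nbrs_nonroot' by auto. pose proof (len_rl v nv).
    repeat constructor; simpl.
    + intros [E|[E|[]]]; apply (f_equal (@length nat)) in E; rewrite length_app in E; simpl in E; lia.
    + intros [E|[]]. apply app_inv_head in E. discriminate.
    + tauto.
Qed.

Section WithInv.
Variable c : config.
Hypothesis I : Inv c.

Lemma root_inf : inf c [].
Proof. apply (inv_root c I). Qed.

Lemma ign_nonroot y : ~ inf c y -> y <> [].
Proof. intros H ->. apply H, root_inf. Qed.

Lemma K1 s y : inf c s -> In y (nbrs s) -> ~ inf c y -> In y (children s).
Proof.
  intros Hs Hy Hi. unfold nbrs in Hy. apply in_app_or in Hy. destruct Hy as [Hy|Hy]; auto.
  destruct s as [|a s]; [simpl in Hy; tauto|]. unfold parent in Hy. destruct Hy as [<-|[]].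
  exfalso; apply Hi, (inv_par c I); auto. discriminate.
Qed.

Lemma K3 y z : ~ inf c y -> In z (children y) -> ~ inf c z.
Proof.
  intros Hy Hz Hinf. destruct (children_spec _ _ Hz) as [nz [r _]].
  apply Hy. rewrite <- r. apply (inv_par c I); auto.
Qed.

Lemma ign_nbrs_spec s y : inf c s -> In y (ign_nbrs c s) ->
  ~ inf c y /\ In y (children s) /\ removelast y = s /\ depth y = S (depth s).
Proof.
  intros Hs Hy. unfold ign_nbrs in Hy. apply filter_In in Hy. destruct Hy as [Hy E].
  apply eta_ign in E. pose proof (K1 s y Hs Hy E). destruct (children_spec _ _ H) as [_ [? ?]]. auto.
Qed.

Lemma filter_all_false {A} (f : A -> bool) l : (forall z, In z l -> f z = false) -> filter f l = [].
Proof. induction l; simpl; intros H; auto. rewrite H; auto. Qed.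

Lemma rate_ign y : ~ inf c y ->
  rate c y = if in_dec veq_dec (removelast y) (spreaders c) then 1%nat else 0%nat.
Proof.
  intros Hy. unfold rate. rewrite (eta_I c y Hy). unfold count_nbrs.
  rewrite (nbrs_nonroot y (ign_nonroot y Hy)). simpl filter.
  rewrite filter_all_false.
  2:{ intros z Hz. rewrite (eta_I c z (K3 y z Hy Hz)). reflexivity. }
  destruct in_dec as [i|n].
  - rewrite (eta_S c _ i). reflexivity.
  - unfold eta. destruct in_dec; [tauto|]. destruct in_dec; reflexivity.
Qed.

Lemma rate_stifler x : ~ In x (spreaders c) -> In x (stiflers c) -> rate c x = 0%nat.
Proof. intros a b. unfold rate. rewrite (eta_T c x a b). reflexivity. Qed.

Lemma rate_spreader s : In s (spreaders c) -> INR (rate c s) = 3 - INR (icount c s).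
Proof.
  intros Hs. unfold rate. rewrite (eta_S c s Hs). unfold count_nbrs, icount, ign_nbrs.
  pose proof (filter_length (fun y => Z.eqb (eta c y) (-1)) (nbrs s)) as L.
  rewrite nbrs_len in L.
  rewrite (filter_ext (fun y => negb (Z.eqb (eta c y) (-1))) (fun y => orb (Z.eqb (eta c y) 0) (Z.eqb (eta c y) 1))) in L.
  2:{ intros y. unfold eta. destruct in_dec; [reflexivity|]. destruct in_dec; reflexivity. }
  apply (f_equal INR) in L. rewrite plus_INR in L. simpl in L. lra.
Qed.


Lemma NoDup_L l : NoDup l -> (forall s, In s l -> inf c s) -> NoDup (flat_map (ign_nbrs c) l).
Proof.
  induction l as [|a l IH]; simpl; intros N H; [constructor|]. inversion N; subst.
  apply NoDup_app.
  - apply NoDup_filter, NoDup_nbrs.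
  - apply IH; auto.
  - intros y Hy Hy2. apply in_flat_map in Hy2. destruct Hy2 as [t [Ht Hyt]].
    destruct (ign_nbrs_spec a y (H a (or_introl eq_refl)) Hy) as [_ [_ [r1 _]]].
    destruct (ign_nbrs_spec t y (H t (or_intror Ht)) Hyt) as [_ [_ [r2 _]]].
    congruence.
Qed.

Lemma decomp h :
  sumR (candidates c) (fun x => INR (rate c x) * h x) =
  sumR (spreaders c) (fun s => (3 - INR (icount c s)) * h s + sumR (ign_nbrs c s) h).
Proof.
  set (L := flat_map (ign_nbrs c) (spreaders c)).
  assert (HL: forall y, In y L -> ~ inf c y /\ In (removelast y) (spreaders c)).
  { intros y Hy. apply in_flat_map in Hy. destruct Hy as [s [Hs Hy]].
    destruct (ign_nbrs_spec s y (or_introl Hs) Hy) as [? [_ [r _]]]. rewrite r; auto. }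
  rewrite (sumR_support (fun x => negb (Nat.eqb (rate c x) 0)) _ (spreaders c ++ L)).
  - rewrite sumR_app, sumR_plus. f_equal.
    + apply sumR_ext_in. intros s Hs. rewrite rate_spreader; auto.
    + unfold L. rewrite sumR_flat_map. apply sumR_ext_in. intros s Hs. apply sumR_ext_in.
      intros y Hy. assert (In y L) by (apply in_flat_map; eauto).
      destruct (HL y H) as [H1 H2]. rewrite rate_ign by auto. destruct in_dec; [|tauto]. simpl. lra.
  - apply NoDup_nodup.
  - apply NoDup_app.
    + apply (inv_ndS c I).
    + apply NoDup_L. apply (inv_ndS c I). intros; left; auto.
    + intros a Ha HaL. destruct (HL a HaL) as [H1 _]. apply H1. left; auto.
  - intros x E. apply Bool.negb_false_iff, Nat.eqb_eq in E. rewrite E. simpl. lra.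
  - intros x E. apply Bool.negb_true_iff, Nat.eqb_neq in E. unfold candidates. rewrite nodup_In.
    rewrite !in_app_iff. split.
    + intros [Hx|Hx]; auto. apply in_flat_map in Hx. destruct Hx as [s [Hs Hx]].
      destruct (in_dec veq_dec x (spreaders c)) as [i|ni]; auto. right.
      destruct (in_dec veq_dec x (stiflers c)) as [j|nj].
      * exfalso. apply E, rate_stifler; auto.
      * unfold L. apply in_flat_map. exists s. split; auto. unfold ign_nbrs. apply filter_In.
        split; auto. apply eta_ign. unfold inf; tauto.
    + intros [Hx|Hx]; auto. right. unfold L in Hx. apply in_flat_map in Hx. destruct Hx as [s [Hs Hx]].
      apply in_flat_map. exists s. split; auto. unfold ign_nbrs in Hx. apply filter_In in Hx. tauto.
Qed.

End WithInv.

Lemma NoDup_remove' (l : list vertex) x : NoDup l -> NoDup (remove veq_dec x l).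
Proof.
  induction l as [|a l IH]; simpl; intros N; auto. inversion N; subst.
  destruct veq_dec; auto. constructor; auto. intros H. apply in_remove in H. tauto.
Qed.

Lemma length_filter_rm {A} (dec : forall x y : A, {x = y} + {x <> y}) (f : A -> bool) l y :
  NoDup l -> In y (filter f l) ->
  S (length (filter (fun z => andb (f z) (if dec z y then false else true)) l)) = length (filter f l).
Proof.
  induction l as [|a l IH]; simpl; intros N H; [tauto|]. inversion N; subst.
  destruct (f a) eqn:Ea; simpl.
  - destruct (dec a y) as [->|ne]; simpl.
    + f_equal. rewrite (filter_ext_in _ f); auto. intros z Hz. destruct (dec z y); [subst; tauto|].
      rewrite Bool.andb_true_r; auto.
    + destruct H as [->|H]; [congruence|]. rewrite IH; auto.
  - apply IH; auto.
Qed.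

Section Flip.
Variable c : config.
Hypothesis I : Inv c.

Lemma flip_S s : In s (spreaders c) -> flip c s = mkConfig (remove veq_dec s (spreaders c)) (s :: stiflers c).
Proof. intros H. unfold flip. rewrite (eta_S c s H). reflexivity. Qed.

Lemma flip_I y : ~ inf c y -> flip c y = mkConfig (y :: spreaders c) (stiflers c).
Proof. intros H. unfold flip. rewrite (eta_I c y H). reflexivity. Qed.

Lemma inf_stifle s x : In s (spreaders c) -> (inf (flip c s) x <-> inf c x).
Proof.
  intros Hs. rewrite flip_S by auto. unfold inf; simpl. split.
  - intros [H|[H|H]]; [apply in_remove in H|subst|]; tauto.
  - intros [H|H]; [|tauto]. destruct (veq_dec x s) as [->|ne]; [tauto|].
    left; apply in_in_remove; auto.
Qed.

Lemma inf_inform y x : ~ inf c y -> (inf (flip c y) x <-> x = y \/ inf c x).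
Proof. intros Hy. rewrite flip_I by auto. unfold inf; simpl. intuition. Qed.

Lemma Inv_stifle s : In s (spreaders c) -> Inv (flip c s).
Proof.
  intros Hs. constructor.
  - rewrite flip_S by auto. apply NoDup_remove', (inv_ndS c I).
  - rewrite flip_S by auto. constructor; [apply (inv_dis c I); auto | apply (inv_ndT c I)].
  - rewrite flip_S by auto. simpl. intros x Hx. apply in_remove in Hx. destruct Hx as [Hx ne].
    intros [E|E]; [congruence|]. apply (inv_dis c I x); auto.
  - apply inf_stifle; auto. apply (inv_root c I).
  - intros x Hx nx. apply inf_stifle; auto. apply inf_stifle in Hx; auto. apply (inv_par c I); auto.
Qed.

Lemma Inv_inform s y : In s (spreaders c) -> In y (ign_nbrs c s) -> Inv (flip c y).
Proof.
  intros Hs Hy. destruct (ign_nbrs_spec c I s y (or_introl Hs) Hy) as [Hiy [_ [r _]]].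
  constructor.
  - rewrite flip_I by auto. constructor; [|apply (inv_ndS c I)]. intros H; apply Hiy; left; auto.
  - rewrite flip_I by auto. apply (inv_ndT c I).
  - rewrite flip_I by auto. simpl. intros x [<-|Hx]. intros H; apply Hiy; right; auto.
    apply (inv_dis c I); auto.
  - apply inf_inform; auto. right. apply (inv_root c I).
  - intros x Hx nx. apply inf_inform; auto. apply inf_inform in Hx; auto. right.
    destruct Hx as [->|Hx]. rewrite r; left; auto. apply (inv_par c I); auto.
Qed.

Lemma Inv_flip x : In x (candidates c) -> rate c x <> 0%nat -> Inv (flip c x).
Proof.
  intros Hx R. unfold candidates in Hx. rewrite nodup_In, in_app_iff in Hx.
  destruct (in_dec veq_dec x (spreaders c)) as [i|ni]. apply Inv_stifle; auto.
  destruct Hx as [Hx|Hx]; [tauto|]. apply in_flat_map in Hx. destruct Hx as [s [Hs Hx]].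
  destruct (in_dec veq_dec x (stiflers c)) as [j|nj]. exfalso; apply R, rate_stifler; auto.
  apply (Inv_inform s); auto. unfold ign_nbrs. apply filter_In. split; auto. apply eta_ign. unfold inf; tauto.
Qed.

Lemma icount_stifle s t : In s (spreaders c) -> icount (flip c s) t = icount c t.
Proof.
  intros Hs. unfold icount, ign_nbrs. f_equal. apply filter_ext. intros z.
  destruct (Z.eqb (eta c z) (-1)) eqn:E1; destruct (Z.eqb (eta (flip c s) z) (-1)) eqn:E2; auto.
  - apply eta_ign in E1. rewrite <- (inf_stifle s z Hs) in E1. apply eta_ign in E1. congruence.
  - apply eta_ign in E2. rewrite (inf_stifle s z Hs) in E2. apply eta_ign in E2. congruence.
Qed.

Lemma eta_nign c0 x : Z.eqb (eta c0 x) (-1) = false -> inf c0 x.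
Proof. unfold inf, eta; destruct in_dec; [tauto|]; destruct in_dec; [tauto|]. simpl; discriminate. Qed.

Lemma ign_inform y z : ~ inf c y ->
  Z.eqb (eta (flip c y) z) (-1) = andb (Z.eqb (eta c z) (-1)) (if veq_dec z y then false else true).
Proof.
  intros Hy. destruct (veq_dec z y) as [E0|ne]; [subst z|]; rewrite ?Bool.andb_false_r, ?Bool.andb_true_r.
  - destruct (Z.eqb (eta (flip c y) y) (-1)) eqn:E; auto. apply eta_ign in E.
    exfalso; apply E, inf_inform; auto.
  - destruct (Z.eqb (eta c z) (-1)) eqn:E1; destruct (Z.eqb (eta (flip c y) z) (-1)) eqn:E2; auto.
    + apply eta_ign in E1. apply eta_nign in E2. apply inf_inform in E2; auto. destruct E2; tauto.
    + apply eta_nign in E1. apply eta_ign in E2. exfalso. apply E2. apply inf_inform; auto.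
Qed.

Section Inform.
Variables s y : vertex.
Hypothesis Hs : In s (spreaders c).
Hypothesis Hy : In y (ign_nbrs c s).

Lemma icount_inform_other t : In t (spreaders c) -> t <> s -> icount (flip c y) t = icount c t.
Proof.
  intros Ht ne. destruct (ign_nbrs_spec c I s y (or_introl Hs) Hy) as [Hiy [_ [r _]]].
  unfold icount, ign_nbrs. f_equal. apply filter_ext_in. intros z Hz.
  rewrite ign_inform by auto. destruct veq_dec as [->|nz]; [|apply Bool.andb_true_r].
  exfalso. pose proof (K1 c I t y (or_introl Ht) Hz Hiy). apply children_spec in H. destruct H as [_ [H _]]. congruence.
Qed.

Lemma icount_inform_s : S (icount (flip c y) s) = icount c s.
Proof.
  destruct (ign_nbrs_spec c I s y (or_introl Hs) Hy) as [Hiy [_ [r _]]].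
  unfold icount, ign_nbrs. rewrite <- (length_filter_rm veq_dec (fun z => Z.eqb (eta c z) (-1)) (nbrs s) y); auto.
  2: apply NoDup_nbrs. f_equal. f_equal. apply filter_ext. intros z. apply ign_inform; auto.
Qed.

Lemma icount_inform_y : icount (flip c y) y = 2%nat.
Proof.
  destruct (ign_nbrs_spec c I s y (or_introl Hs) Hy) as [Hiy [_ [r _]]].
  pose proof (ign_nonroot c I y Hiy) as ny.
  unfold icount, ign_nbrs. rewrite nbrs_nonroot by auto. simpl filter. rewrite r.
  rewrite ign_inform by auto. rewrite (eta_S c s Hs). simpl.
  rewrite (filter_ext_in _ (fun _ => true)).
  - rewrite List.filter_true. destruct y; [congruence|reflexivity].
  - intros z Hz. rewrite ign_inform by auto. destruct veq_dec. exfalso; apply (child_neq y z); auto.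
    rewrite Bool.andb_true_r. apply eta_ign. apply (K3 c I y z); auto.
Qed.

End Inform.
End Flip.

Definition G (s : R) : R := 1/3 + 4/9 * s + 2/9 * s^2.
Fixpoint bb (m : nat) : R := match m with O => 0 | S m' => G (bb m') end.
Fixpoint Phi (i m : nat) : R :=
  match i with O => 1 | S i' => ((3 - INR (S i')) + INR (S i') * Phi i' m * bb m) / 3 end.
Definition psi (n d i : nat) : R := if Nat.leb d n then Phi i (n - d) else 0.
Definition Ff (n : nat) (c : config) : R :=
  if good n c then prodR (spreaders c) (fun s => psi n (depth s) (icount c s)) else 0.
Fixpoint E (i : nat) : R := match i with O => 1 | S i' => (3 + INR (S i') * (E i' + 17)) / 3 end.
Definition Nf (c : config) : R := sumR (spreaders c) (fun s => E (icount c s)).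

Lemma Phi2 m : Phi 2 m = G (bb m).
Proof. simpl. unfold G. field. Qed.

Lemma E2 : E 2 = 17.
Proof. simpl. field. Qed.

Lemma psi_step n d i :
  3 * psi n d (S i) = (3 - INR (S i)) * (if Nat.leb d n then 1 else 0) + INR (S i) * psi n d i * psi n (S d) 2.
Proof.
  unfold psi. destruct (Nat.leb d n) eqn:E1.
  - apply Nat.leb_le in E1. replace (if Nat.leb (S d) n then Phi 2 (n - S d) else 0) with (bb (n - d)).
    + change (Phi (S i) (n - d)) with (((3 - INR (S i)) + INR (S i) * Phi i (n-d) * bb (n-d))/3). lra.
    + destruct (Nat.leb (S d) n) eqn:E2'.
      * apply Nat.leb_le in E2'. replace (n - d)%nat with (S (n - S d)) by lia. rewrite Phi2. reflexivity.
      * apply Nat.leb_gt in E2'. replace (n - d)%nat with 0%nat by lia. reflexivity.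
  - lra.
Qed.

Lemma bb_bounds m : 0 <= bb m <= 1.
Proof. induction m; simpl; [lra|]. unfold G. nra. Qed.

Lemma Phi_bounds i m : (i <= 3)%nat -> 0 <= Phi i m <= 1.
Proof.
  induction i; intros H; [simpl; lra|].
  change (Phi (S i) m) with (((3 - INR (S i)) + INR (S i) * Phi i m * bb m)/3). pose proof (IHi ltac:(lia)). pose proof (bb_bounds m).
  assert (0 <= Phi i m * bb m <= 1) by nra.
  assert (INR (S i) <= 3) by (replace 3 with (INR 3) by (simpl; lra); apply le_INR; auto).
  assert (0 <= INR (S i)) by apply pos_INR.
  rewrite Rmult_assoc. assert (INR (S i) * (Phi i m * bb m) <= INR (S i)) by nra.
  assert (0 <= INR (S i) * (Phi i m * bb m)) by nra.
  unfold Rdiv. split; lra.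
Qed.

Lemma psi_bounds n d i : (i <= 3)%nat -> 0 <= psi n d i <= 1.
Proof. unfold psi; destruct Nat.leb; [apply Phi_bounds|lra]. Qed.

Lemma icount_le c s : (icount c s <= 3)%nat.
Proof. unfold icount, ign_nbrs. rewrite <- (nbrs_len s). apply filter_length_le. Qed.

Lemma Ff_bounds n c : 0 <= Ff n c <= 1.
Proof. unfold Ff. destruct good; [|lra]. apply prodR_bounds. intros; apply psi_bounds, icount_le. Qed.

Lemma E_pos i : 0 <= E i.
Proof. induction i; [simpl; lra|]. change (E (S i)) with ((3 + INR (S i) * (E i + 17)) / 3).
  pose proof (pos_INR (S i)). unfold Rdiv. apply Rmult_le_pos; [|lra]. nra. Qed.

Lemma Nf_pos c : 0 <= Nf c.
Proof. apply sumR_nonneg. intros; apply E_pos. Qed.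

Lemma total_sum_gen c l :
  INR (fold_right (fun x acc => (rate c x + acc)%nat) 0%nat l) = sumR l (fun x => INR (rate c x)).
Proof. induction l; simpl; auto. rewrite plus_INR, IHl. reflexivity. Qed.

Lemma good_stifle n c s : In s (spreaders c) -> good n (flip c s) = andb (Nat.leb (depth s) n) (good n c).
Proof. intros H. rewrite flip_S by auto. reflexivity. Qed.

Lemma good_inform n c y : ~ inf c y -> good n (flip c y) = good n c.
Proof. intros H. rewrite flip_I by auto. reflexivity. Qed.

Section H.
Variable c : config.
Hypothesis I : Inv c.

Lemma total_eq : INR (total_rate c) = 3 * INR (length (spreaders c)).
Proof.
  unfold total_rate. rewrite total_sum_gen.
  rewrite (sumR_ext_in _ _ (fun x => INR (rate c x) * 1)) by (intros; lra).
  rewrite decomp by auto.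
  rewrite (sumR_ext_in _ _ (fun _ => 3)).
  - rewrite sumR_const. lra.
  - intros s Hs. rewrite sumR_const. fold (icount c s). lra.
Qed.

Lemma harm_F n :
  sumR (candidates c) (fun x => INR (rate c x) * Ff n (flip c x)) = 3 * INR (length (spreaders c)) * Ff n c.
Proof.
  rewrite decomp by auto.
  rewrite (sumR_ext_in _ _ (fun _ => 3 * Ff n c)).
  { rewrite sumR_const. lra. }
  intros s Hs. set (psc := fun t => psi n (depth t) (icount c t)).
  set (Prem := prodR (remove veq_dec s (spreaders c)) psc).
  assert (Hc : Ff n c = if good n c then psc s * Prem else 0).
  { unfold Ff. destruct good; auto. apply prodR_remove; auto. apply (inv_ndS c I). }
  assert (Hst : Ff n (flip c s) = if good n c then (if Nat.leb (depth s) n then 1 else 0) * Prem else 0).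
  { unfold Ff. rewrite good_stifle by auto. destruct (good n c); destruct (Nat.leb (depth s) n); simpl; try lra.
    rewrite flip_S at 1 by auto. simpl spreaders. unfold Prem. rewrite Rmult_1_l.
    apply prodR_ext_in. intros t _. unfold psc. rewrite icount_stifle; auto. }
  assert (Hinf : forall y, In y (ign_nbrs c s) ->
     Ff n (flip c y) = if good n c then psi n (S (depth s)) 2 * psi n (depth s) (icount (flip c y) s) * Prem else 0).
  { intros y Hy. destruct (ign_nbrs_spec c I s y (or_introl Hs) Hy) as [Hiy [_ [r dy]]].
    unfold Ff. rewrite good_inform by auto. destruct (good n c); [|reflexivity].
    rewrite flip_I at 1 by auto. simpl spreaders. simpl prodR.
    rewrite (prodR_remove (spreaders c) s) by (auto; apply (inv_ndS c I)).
    rewrite (icount_inform_y c I s y Hs Hy), dy. rewrite Rmult_assoc. f_equal. f_equal.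
    unfold Prem. apply prodR_ext_in. intros t Ht. apply in_remove in Ht. destruct Ht as [Ht ne].
    unfold psc. rewrite (icount_inform_other c I s y Hs Hy t); auto. }
  rewrite Hst. rewrite (sumR_ext_in _ _ (fun y => if good n c then psi n (S (depth s)) 2 * psi n (depth s) (pred (icount c s)) * Prem else 0)).
  2:{ intros y Hy. rewrite Hinf by auto. rewrite <- (icount_inform_s c I s y Hs Hy). reflexivity. }
  rewrite sumR_const. fold (icount c s). rewrite Hc.
  destruct (good n c); [|lra]. unfold psc.
  destruct (icount c s) as [|i] eqn:Ei.
  - unfold psi. simpl INR. destruct (Nat.leb (depth s) n); simpl; lra.
  - simpl pred. pose proof (psi_step n (depth s) i) as Hps. rewrite <- (Rmult_assoc 3), Hps. ring.
Qed.

Lemma harm_N :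
  sumR (candidates c) (fun x => INR (rate c x) * Nf (flip c x)) = 3 * INR (length (spreaders c)) * (Nf c - 1).
Proof.
  rewrite decomp by auto.
  rewrite (sumR_ext_in _ _ (fun _ => 3 * (Nf c - 1))).
  { rewrite sumR_const. lra. }
  intros s Hs. set (Rem := sumR (remove veq_dec s (spreaders c)) (fun t => E (icount c t))).
  assert (Hc : Nf c = E (icount c s) + Rem).
  { unfold Nf, Rem. apply (sumR_remove _ _ (fun t => E (icount c t))); auto. apply (inv_ndS c I). }
  assert (Hst : Nf (flip c s) = Rem).
  { unfold Nf. rewrite flip_S at 1 by auto. simpl spreaders. unfold Rem.
    apply sumR_ext_in. intros t _. rewrite icount_stifle; auto. }
  assert (Hinf : forall y, In y (ign_nbrs c s) ->
     Nf (flip c y) = 17 + E (icount (flip c y) s) + Rem).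
  { intros y Hy. destruct (ign_nbrs_spec c I s y (or_introl Hs) Hy) as [Hiy [_ [r dy]]].
    unfold Nf. rewrite flip_I at 1 by auto. simpl spreaders. simpl sumR.
    rewrite (sumR_remove (spreaders c) s) by (auto; apply (inv_ndS c I)).
    rewrite (icount_inform_y c I s y Hs Hy), E2.
    assert (sumR (remove veq_dec s (spreaders c)) (fun s0 => E (icount (flip c y) s0)) = Rem).
    { unfold Rem. apply sumR_ext_in. intros t Ht. apply in_remove in Ht. destruct Ht as [Ht ne].
      rewrite (icount_inform_other c I s y Hs Hy t); auto. }
    lra. }
  rewrite Hst. rewrite (sumR_ext_in _ _ (fun y => 17 + E (pred (icount c s)) + Rem)).
  2:{ intros y Hy. rewrite Hinf by auto. rewrite <- (icount_inform_s c I s y Hs Hy). reflexivity. }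
  rewrite sumR_const. fold (icount c s). rewrite Hc.
  destruct (icount c s) as [|i] eqn:Ei.
  - simpl. lra.
  - simpl pred. change (E (S i)) with ((3 + INR (S i) * (E i + 17)) / 3). lra.
Qed.

End H.

Definition stepR (c : config) (h : config -> R) : R :=
  sumR (candidates c) (fun x => INR (rate c x) / INR (total_rate c) * h (flip c x)).

Fixpoint u (k : nat) (c : config) : R :=
  if Nat.eqb (total_rate c) 0 then 0 else
  match k with O => 1 | S k' => stepR c (u k') end.

Fixpoint V (k : nat) (c : config) : R :=
  match k with O => 0 | S k' => if Nat.eqb (total_rate c) 0 then 0 else 1 + stepR c (V k') end.

Lemma q_S k n c : q (S k) n c =
  if good n c then (if Nat.eqb (total_rate c) 0 then 1 else stepR c (q k n)) else 0.
Proof. reflexivity. Qed.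

Lemma q_0 n c : q 0 n c = if good n c then 1 else 0.
Proof. reflexivity. Qed.

Lemma coef_nonneg a b : 0 <= INR a / INR b.
Proof.
  destruct b. simpl. unfold Rdiv. rewrite Rinv_0, Rmult_0_r. lra.
  unfold Rdiv. apply Rmult_le_pos. apply pos_INR. apply Rlt_le, Rinv_0_lt_compat, lt_0_INR. lia.
Qed.

Section S.
Variable c : config.
Hypothesis I : Inv c.

Lemma step_le h1 h2 : (forall c', Inv c' -> h1 c' <= h2 c') -> stepR c h1 <= stepR c h2.
Proof.
  intros H. apply sumR_le_in. intros x Hx. destruct (Nat.eq_dec (rate c x) 0) as [e|ne].
  - rewrite e. simpl INR. unfold Rdiv. rewrite !Rmult_0_l. lra.
  - apply Rmult_le_compat_l. apply coef_nonneg. apply H. apply Inv_flip; auto.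
Qed.

Lemma step_eq_scaled h : total_rate c <> 0%nat ->
  stepR c h = / INR (total_rate c) * sumR (candidates c) (fun x => INR (rate c x) * h (flip c x)).
Proof.
  intros T. unfold stepR. rewrite <- sumR_scal. apply sumR_ext_in. intros. unfold Rdiv. ring.
Qed.

Lemma total_pos : total_rate c <> 0%nat -> 0 < INR (total_rate c).
Proof. intros; apply lt_0_INR; lia. Qed.

Lemma total0_nil : total_rate c = 0%nat -> spreaders c = [].
Proof.
  intros T. pose proof (total_eq c I) as H. rewrite T in H. simpl in H.
  destruct (spreaders c); auto. simpl length in H. rewrite S_INR in H. pose proof (pos_INR (length l)). lra.
Qed.

Lemma step_const a : total_rate c <> 0%nat -> stepR c (fun _ => a) = a.
Proof.
  intros T. rewrite step_eq_scaled by auto.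
  rewrite (sumR_ext_in _ _ (fun x => a * INR (rate c x))) by (intros; ring).
  rewrite sumR_scal. replace (sumR (candidates c) (fun x => INR (rate c x))) with (INR (total_rate c)) by (unfold total_rate; apply total_sum_gen).
  field. apply Rgt_not_eq, total_pos; auto.
Qed.

Lemma step_F n : total_rate c <> 0%nat -> stepR c (Ff n) = Ff n c.
Proof.
  intros T. rewrite step_eq_scaled, harm_F, total_eq by auto.
  assert (0 < INR (total_rate c)) by (apply total_pos; auto). rewrite total_eq in H by auto.
  field. lra.
Qed.

Lemma step_N : total_rate c <> 0%nat -> stepR c Nf = Nf c - 1.
Proof.
  intros T. rewrite step_eq_scaled, harm_N, total_eq by auto.
  assert (0 < INR (total_rate c)) by (apply total_pos; auto). rewrite total_eq in H by auto.
  field. lra.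
Qed.

Lemma step_plus h1 h2 : stepR c (fun c' => h1 c' + h2 c') = stepR c h1 + stepR c h2.
Proof. unfold stepR. rewrite <- sumR_plus. apply sumR_ext_in. intros. ring. Qed.

End S.

Lemma u_bounds k c : Inv c -> 0 <= u k c <= 1.
Proof.
  revert c; induction k; intros c I; simpl u; destruct (Nat.eqb (total_rate c) 0) eqn:T; try lra.
  apply Nat.eqb_neq in T. split.
  - eapply Rle_trans; [|apply (step_le c I (fun _ => 0) (u k)); intros; apply IHk; auto].
    rewrite step_const; auto; lra.
  - eapply Rle_trans; [apply (step_le c I (u k) (fun _ => 1)); intros; apply IHk; auto|].
    rewrite step_const; auto; lra.
Qed.

Lemma u_mono k c : Inv c -> u (S k) c <= u k c.
Proof.
  revert c; induction k; intros c I.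
  - change (u 1 c) with (if Nat.eqb (total_rate c) 0 then 0 else stepR c (u 0)).
    change (u 0 c) with (if Nat.eqb (total_rate c) 0 then 0 else 1).
    destruct (Nat.eqb (total_rate c) 0) eqn:T; try lra. apply Nat.eqb_neq in T.
    eapply Rle_trans; [apply (step_le c I (u 0) (fun _ => 1)); intros; apply u_bounds; auto|].
    rewrite step_const; auto; lra.
  - change (u (S (S k)) c) with (if Nat.eqb (total_rate c) 0 then 0 else stepR c (u (S k))).
    change (u (S k) c) with (if Nat.eqb (total_rate c) 0 then 0 else stepR c (u k)).
    destruct Nat.eqb; [lra|]. apply step_le; auto.
Qed.

Lemma V_step k c : Inv c -> V (S k) c = V k c + u k c.
Proof.
  revert c; induction k; intros c I.
  - simpl. destruct Nat.eqb eqn:T; [lra|]. apply Nat.eqb_neq in T.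
    assert (stepR c (V 0) = 0). { rewrite <- (step_const c 0 T). reflexivity. } simpl in H. rewrite H. lra.
  - change (V (S (S k)) c) with (if Nat.eqb (total_rate c) 0 then 0 else 1 + stepR c (V (S k))).
    change (V (S k) c) with (if Nat.eqb (total_rate c) 0 then 0 else 1 + stepR c (V k)).
    change (u (S k) c) with (if Nat.eqb (total_rate c) 0 then 0 else stepR c (u k)).
    destruct Nat.eqb; [lra|].
    assert (stepR c (V (S k)) = stepR c (fun c' => V k c' + u k c')).
    { unfold stepR. apply sumR_ext_in. intros x Hx. destruct (Nat.eq_dec (rate c x) 0) as [e|ne].
      - rewrite e. simpl INR. unfold Rdiv. rewrite !Rmult_0_l. lra.
      - rewrite IHk; auto. apply Inv_flip; auto. }
    rewrite H, step_plus. lra.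
Qed.

Lemma V_le_N k c : Inv c -> V k c <= Nf c.
Proof.
  revert c; induction k; intros c I; simpl V. apply Nf_pos.
  destruct Nat.eqb eqn:T. apply Nf_pos. apply Nat.eqb_neq in T.
  pose proof (step_N c I T). pose proof (step_le c I (V k) Nf IHk). lra.
Qed.

Lemma ku k c : Inv c -> INR (S k) * u k c <= Nf c.
Proof.
  intros I. eapply Rle_trans; [|apply (V_le_N (S k) c I)].
  induction k.
  - rewrite V_step by auto. simpl. lra.
  - rewrite V_step by auto. rewrite S_INR. pose proof (u_mono k c I). pose proof (u_bounds (S k) c I).
    pose proof (pos_INR (S k)). nra.
Qed.

Lemma q_sand n k c : Inv c -> Ff n c <= q k n c <= Ff n c + u k c.
Proof.
  revert c; induction k; intros c I.
  - rewrite q_0. unfold Ff at 1 2. destruct (good n c) eqn:Gd.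
    + pose proof (Ff_bounds n c) as B. unfold Ff in B. rewrite Gd in B. simpl u.
      destruct Nat.eqb eqn:T.
      * apply Nat.eqb_eq in T. rewrite (total0_nil c I T). simpl. lra.
      * lra.
    + pose proof (u_bounds 0 c I). lra.
  - rewrite q_S. destruct (good n c) eqn:Gd.
    + destruct Nat.eqb eqn:T.
      * apply Nat.eqb_eq in T. unfold Ff. rewrite Gd, (total0_nil c I T). simpl.
        rewrite T. simpl. lra.
      * apply Nat.eqb_neq in T. rewrite <- (step_F c I n T) at 1 2. split.
        -- apply step_le; auto. apply IHk.
        -- change (u (S k) c) with (if Nat.eqb (total_rate c) 0 then 0 else stepR c (u k)).
           apply Nat.eqb_neq in T. rewrite T. rewrite <- step_plus. apply step_le; auto. apply IHk.
    + unfold Ff. rewrite Gd. pose proof (u_bounds (S k) c I). lra.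
Qed.

Lemma Inv_init : Inv init.
Proof.
  constructor; simpl.
  - repeat constructor; simpl; tauto.
  - constructor.
  - tauto.
  - left; left; reflexivity.
  - intros x [[<-|[]]|[]] H; exfalso; apply H; reflexivity.
Qed.

Lemma icount_init : icount init root = 3%nat.
Proof. reflexivity. Qed.

Lemma Ff_init n : Ff n init = Phi 3 n.
Proof.
  unfold Ff. simpl good. simpl spreaders. simpl prodR. rewrite icount_init.
  unfold psi. simpl depth. rewrite Nat.sub_0_r. simpl Nat.leb. change (good n init) with true. simpl. ring.
Qed.

Lemma lim_inv_S : is_lim_seq (fun k => / INR (S k)) 0.
Proof.
  apply (is_lim_seq_incr_1 (fun k => / INR k)).
  replace (Finite 0) with (Rbar_inv p_infty) by reflexivity.
  apply is_lim_seq_inv. apply is_lim_seq_INR. discriminate.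
Qed.

Lemma q_lim n : is_lim_seq (fun k => q k n init) (Phi 3 n).
Proof.
  rewrite <- Ff_init.
  apply is_lim_seq_le_le with (u := fun _ => Ff n init) (w := fun k => Ff n init + Nf init * / INR (S k)).
  - intros k. pose proof (q_sand n k init Inv_init). pose proof (ku k init Inv_init).
    assert (0 < INR (S k)) by (apply lt_0_INR; lia).
    assert (u k init <= Nf init * / INR (S k)).
    { apply (Rmult_le_reg_l (INR (S k))); auto. rewrite <- Rmult_assoc, (Rmult_comm _ (Nf init)), Rmult_assoc, Rinv_r; lra. }
    lra.
  - apply is_lim_seq_const.
  - pose proof (is_lim_seq_scal_l _ (Nf init) _ lim_inv_S) as H. simpl in H.
    pose proof (is_lim_seq_plus' _ _ _ _ (is_lim_seq_const (Ff n init)) H) as L.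
    rewrite Rmult_0_r, Rplus_0_r in L. exact L.
Qed.

Lemma P_R_le_eq n : P_R_le n = Phi 3 n.
Proof. unfold P_R_le. rewrite (is_lim_seq_unique _ _ (q_lim n)). reflexivity. Qed.

Definition H3 (s : R) : R := s * G s.
Lemma P_R_le_H n : P_R_le n = H3 (bb n).
Proof. rewrite P_R_le_eq. unfold H3, G. simpl. field. Qed.

Lemma xr_bounds n : 0 < (8/9)^n <= 1.
Proof.
  split. apply pow_lt; lra.
  induction n; simpl; [lra|]. assert (0 < (8/9)^n) by (apply pow_lt; lra). nra.
Qed.

Lemma alpha2_x n : alpha2 n = 1 - (8/9)^n / (4 - 3 * (8/9)^n).
Proof. unfold alpha2. pose proof (xr_bounds n). field. lra. Qed.
Lemma alpha1_x n : alpha1 n = 1 - 4 * (8/9)^n / (13 - 9 * (8/9)^n).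
Proof. unfold alpha1. pose proof (xr_bounds n). field. lra. Qed.

Definition M2 (s : R) := (4 + 5 * s) / (3 * (4 - s)).
Definition M1 (s : R) := (13 + 23 * s) / (9 * (5 - s)).

Lemma alpha2_S n : alpha2 (S n) = M2 (alpha2 n).
Proof.
  rewrite !alpha2_x. unfold M2. simpl pow. pose proof (xr_bounds n). set (x := (8/9)^n) in *.
  field. split; [|split]; lra || (intro; field_simplify in H0; lra).
Qed.

Lemma alpha1_S n : alpha1 (S n) = M1 (alpha1 n).
Proof.
  rewrite !alpha1_x. unfold M1. simpl pow. pose proof (xr_bounds n). set (x := (8/9)^n) in *.
  field. split; [|split]; lra || (intro; field_simplify in H0; lra).
Qed.

Lemma div_le1 a b : 0 < b -> a <= b -> a / b <= 1.
Proof. intros. apply (Rmult_le_reg_r b); auto. unfold Rdiv. rewrite Rmult_assoc, Rinv_l; lra. Qed.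

Lemma alpha2_bounds n : 0 <= alpha2 n <= 1.
Proof.
  rewrite alpha2_x. pose proof (xr_bounds n). set (x := (8/9)^n) in *.
  assert (0 <= x / (4 - 3*x) <= 1). { split; [apply Rdiv_le_0_compat; lra|]. apply div_le1; lra. }
  lra.
Qed.
Lemma alpha1_bounds n : 0 <= alpha1 n <= 1.
Proof.
  rewrite alpha1_x. pose proof (xr_bounds n). set (x := (8/9)^n) in *.
  assert (0 <= 4 * x / (13 - 9*x) <= 1). { split; [apply Rdiv_le_0_compat; lra|]. apply div_le1; lra. }
  lra.
Qed.

Lemma G_mono a b : 0 <= a <= b -> G a <= G b.
Proof. intros. unfold G. assert (a*a <= b*b) by nra. replace (a^2) with (a*a) by ring. replace (b^2) with (b*b) by ring. lra. Qed.

Lemma G_le_M2 s : 0 <= s <= 1 -> G s <= M2 s.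
Proof.
  intros. unfold M2, G. apply (Rmult_le_reg_r (9 * (4 - s))). nra.
  unfold Rdiv. field_simplify; [|lra].
  assert (H1: 0 <= s * ((s-1)*(s-1))) by (apply Rmult_le_pos; nra).
  replace (s^3) with (s*s*s) by ring. replace (s^2) with (s*s) by ring. lra.
Qed.

Lemma M1_le_G s : 0 <= s <= 1 -> M1 s <= G s.
Proof.
  intros. unfold M1, G. apply (Rmult_le_reg_r (9 * (5 - s))). nra.
  unfold Rdiv. field_simplify; [|lra].
  assert (H1: 0 <= (1-s) * ((1-s)*(1-s))) by (apply Rmult_le_pos; nra).
  replace (s^3) with (s*s*s) by ring. replace (s^2) with (s*s) by ring. lra.
Qed.

Lemma bb_le_alpha2 n : bb n <= alpha2 n.
Proof.
  induction n. simpl. pose proof (alpha2_bounds 0). lra.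
  simpl bb. rewrite alpha2_S. pose proof (bb_bounds n). pose proof (alpha2_bounds n).
  eapply Rle_trans. apply G_mono. split; [lra|exact IHn]. apply G_le_M2; auto.
Qed.

Lemma alpha1_le_bb n : alpha1 n <= bb n.
Proof.
  induction n. simpl. unfold alpha1. simpl. lra.
  simpl bb. rewrite alpha1_S. pose proof (bb_bounds n). pose proof (alpha1_bounds n).
  eapply Rle_trans. apply M1_le_G; auto. apply G_mono. split; [lra|exact IHn].
Qed.

Lemma H3_mono a b : 0 <= a <= b -> H3 a <= H3 b.
Proof. intros. unfold H3, G. assert (0 <= a*a) by nra. assert (a*a <= b*b) by nra. nra. Qed.

Lemma part1 n :
  3/9 * alpha1 n + 4/9 * alpha1 n ^ 2 + 2/9 * alpha1 n ^ 3 <= P_R_le n /\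
  P_R_le n <= 3/9 * alpha2 n + 4/9 * alpha2 n ^ 2 + 2/9 * alpha2 n ^ 3.
Proof.
  rewrite P_R_le_H. pose proof (alpha1_bounds n). pose proof (alpha2_bounds n).
  pose proof (alpha1_le_bb n). pose proof (bb_le_alpha2 n).
  replace (3/9 * alpha1 n + 4/9 * alpha1 n ^ 2 + 2/9 * alpha1 n ^ 3) with (H3 (alpha1 n)) by (unfold H3, G; field).
  replace (3/9 * alpha2 n + 4/9 * alpha2 n ^ 2 + 2/9 * alpha2 n ^ 3) with (H3 (alpha2 n)) by (unfold H3, G; field).
  split; apply H3_mono; lra.
Qed.

Definition hfun (e : R) : R := 17/9 * e - 10/9 * e^2 + 2/9 * e^3.

Lemma one_minus_H3 a : 1 - H3 a = hfun (1 - a).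
Proof. unfold H3, G, hfun. field. Qed.

Lemma h_mono a b : a <= b -> hfun a <= hfun b.
Proof.
  intros Hab.
  assert (E: hfun b - hfun a = (b - a) * ((3/2 * (a + b - 10/3)^2 + 1/3 + 1/2 * (a-b)^2) / 9)) by (unfold hfun; field).
  assert (0 <= (3/2 * (a + b - 10/3)^2 + 1/3 + 1/2 * (a-b)^2) / 9).
  { assert (0 <= (a + b - 10/3)^2) by apply pow2_ge_0. assert (0 <= (a-b)^2) by apply pow2_ge_0.
    unfold Rdiv. apply Rmult_le_pos; lra. }
  assert (0 <= (b - a) * ((3/2 * (a + b - 10/3)^2 + 1/3 + 1/2 * (a-b)^2) / 9)) by (apply Rmult_le_pos; lra).
  lra.
Qed.

Lemma h_nonneg e : 0 <= e -> 0 <= hfun e.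
Proof. intros. replace 0 with (hfun 0) by (unfold hfun; ring). apply h_mono; auto. Qed.

Lemma h_le_lin e : 0 <= e <= 5 -> hfun e <= 17/9 * e.
Proof. intros. unfold hfun. assert (0 <= e*e*(10 - 2*e)) by (apply Rmult_le_pos; nra).
  replace (e^2) with (e*e) by ring. replace (e^3) with (e*e*e) by ring. lra. Qed.

Definition pp (n : nat) : R := P_R_le n.

Lemma pp_eq n : 1 - pp n = hfun (1 - bb n).
Proof. unfold pp. rewrite P_R_le_H. apply one_minus_H3. Qed.

Lemma pp_le1 n : 0 <= 1 - pp n.
Proof. rewrite pp_eq. apply h_nonneg. pose proof (bb_bounds n). lra. Qed.

Lemma pp_upper n : 1 - pp n <= hfun (4 * (8/9)^n / (13 - 9 * (8/9)^n)).
Proof.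
  rewrite pp_eq. apply h_mono. pose proof (alpha1_le_bb n). rewrite alpha1_x in H. lra.
Qed.

Lemma pp_lower n : hfun ((8/9)^n / (4 - 3 * (8/9)^n)) <= 1 - pp n.
Proof.
  rewrite pp_eq. apply h_mono. pose proof (bb_le_alpha2 n). rewrite alpha2_x in H. lra.
Qed.

Lemma pp_lin n : 1 - pp n <= 17/9 * (8/9)^n.
Proof.
  eapply Rle_trans; [apply pp_upper|]. pose proof (xr_bounds n). set (x := (8/9)^n) in *.
  assert (0 <= 4 * x / (13 - 9 * x) <= x).
  { split. apply Rdiv_le_0_compat; lra. apply (Rmult_le_reg_r (13 - 9*x)); [lra|].
    unfold Rdiv. rewrite Rmult_assoc, Rinv_l by lra. nra. }
  eapply Rle_trans; [apply h_le_lin; lra|]. lra.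
Qed.

Fixpoint peval (k : nat) (cs : list R) (x : R) : R :=
  match cs with [] => 0 | c :: cs' => c * x ^ k + peval (S k) cs' x end.
Fixpoint sval (k : nat) (cs : list R) : R :=
  match cs with [] => 0 | c :: cs' => c / (1 - (8/9) ^ k) + sval (S k) cs' end.

Lemma is_series_Rplus a b la lb : is_series a la -> is_series b lb -> is_series (fun n => a n + b n) (la + lb).
Proof. intros. apply (is_series_plus a b la lb); auto. Qed.
Lemma is_series_Rscal c a l : is_series a l -> is_series (fun n => c * a n) (c * l).
Proof. intros. apply (is_series_scal c a l); auto. Qed.

Lemma geom_k k : (1 <= k)%nat -> is_series (fun n => ((8/9)^n)^k) (/ (1 - (8/9)^k)).
Proof.
  intros Hk. apply (is_series_ext (fun n => ((8/9)^k)^n)).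
  - intros n. rewrite <- !pow_mult. f_equal. lia.
  - apply is_series_geom. rewrite Rabs_pos_eq by (apply pow_le; lra).
    destruct k; [lia|]. simpl. assert (0 < (8/9)^k <= 1) by apply xr_bounds. nra.
Qed.

Lemma peval_series k cs : (1 <= k)%nat -> is_series (fun n => peval k cs ((8/9)^n)) (sval k cs).
Proof.
  revert k; induction cs as [|c cs IH]; intros k Hk; simpl.
  - apply (is_series_ext (fun n => 0 * ((8/9)^n)^k)).
    { intros n. apply Rmult_0_l. }
    pose proof (is_series_Rscal 0 _ _ (geom_k k Hk)) as H. rewrite Rmult_0_l in H. exact H.
  - apply is_series_Rplus. unfold Rdiv. apply is_series_Rscal, geom_k; auto. apply IH. lia.
Qed.

Definition csL : list R := [(17/36) ; (41/144) ; (95/576) ; (23/256) ; (45/1024) ; (-195/2048) ; (-405/8192) ; (-729/32768) ; (-891/131072) ; (729/524288) ; (10935/2097152) ; (10935/4194304) ; (19683/16777216) ; (59049/134217728) ; (59049/536870912)].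
Definition csU : list R := [(68/117) ; (452/1521) ; (212/1521) ; (13965/28561) ; (-103248/371293) ; (-701136/4826809) ; (-4443984/62748517) ; (-72709002/815730721) ; (394447320/10604499373) ; (216827928/10604499373) ; (114791256/10604499373) ; (86093442/10604499373)].

Lemma svalL : 6144/1000 <= sval 1 csL.
Proof. unfold csL. simpl sval. simpl pow. lra. Qed.

Lemma svalU : sval 1 csU <= 7448/1000.
Proof. unfold csU. simpl sval. simpl pow. lra. Qed.

Definition elo (x : R) : R := x/4 + 3/16 * x^2 + 9/64 * x^3 + 27/256 * x^4 + 81/1024 * x^5.
Definition Uf (x : R) : R := 4/13 * x + 36/169 * x^2 + 324/2197 * x^3 + 729/2197 * x^4.

Lemma PL_id x : hfun (elo x) = peval 1 csL x.
Proof. unfold hfun, elo, csL. simpl peval. field. Qed.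

Lemma PU_id x : hfun (Uf x) = peval 1 csU x.
Proof. unfold hfun, Uf, csU. simpl peval. field. Qed.

Lemma elo_bounds x : 0 < x <= 1 -> 0 <= elo x <= x / (4 - 3 * x).
Proof.
  intros H. assert (0 <= x^2) by (apply pow_le; lra). assert (0 <= x^3) by (apply pow_le; lra).
  assert (0 <= x^4) by (apply pow_le; lra). assert (0 <= x^5) by (apply pow_le; lra).
  split. unfold elo. lra.
  apply (Rmult_le_reg_r (4 - 3*x)); [lra|]. unfold Rdiv. rewrite Rmult_assoc, Rinv_l by lra.
  assert (0 <= x^6) by (apply pow_le; lra).
  replace (elo x * (4 - 3 * x)) with (x - 243/1024 * x^6) by (unfold elo; field). lra.
Qed.

Lemma Uf_bound x : 0 < x <= 1 -> 4 * x / (13 - 9 * x) <= Uf x.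
Proof.
  intros H. apply (Rmult_le_reg_r (13 - 9*x)); [lra|]. unfold Rdiv. rewrite Rmult_assoc, Rinv_l by lra.
  assert (0 <= x^4 * (1 - x)) by (apply Rmult_le_pos; [apply pow_le|]; lra).
  replace (Uf x * (13 - 9 * x)) with (4 * x + 6561/2197 * (x^4 * (1 - x))) by (unfold Uf; field). lra.
Qed.

Lemma term_lower n : 0 <= peval 1 csL ((8/9)^n) <= 1 - pp n.
Proof.
  pose proof (xr_bounds n). rewrite <- PL_id. pose proof (elo_bounds _ H). split.
  apply h_nonneg; lra. eapply Rle_trans; [|apply pp_lower]. apply h_mono; lra.
Qed.

Lemma term_upper n : 0 <= 1 - pp n <= peval 1 csU ((8/9)^n).
Proof.
  pose proof (xr_bounds n). rewrite <- PU_id. split. apply pp_le1.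
  eapply Rle_trans; [apply pp_upper|]. apply h_mono. apply Uf_bound; auto.
Qed.

Lemma ex_series_pp : ex_series (fun n => 1 - pp n).
Proof.
  apply (@ex_series_le R_AbsRing R_CompleteNormedModule _ (fun n => peval 1 csU ((8/9)^n))).
  - intros n. pose proof (term_upper n). change (norm (1 - pp n)) with (Rabs (1 - pp n)).
    rewrite Rabs_pos_eq; lra.
  - eexists. apply peval_series; lia.
Qed.

Definition ER : R := Series (fun n => 1 - pp n).

Lemma ER_bounds : 6144/1000 <= ER <= 7448/1000.
Proof.
  split.
  - eapply Rle_trans; [apply svalL|]. rewrite <- (is_series_unique _ _ (peval_series 1 csL (le_n 1))).
    apply Series_le. apply term_lower. apply ex_series_pp.
  - eapply Rle_trans; [|apply svalU]. rewrite <- (is_series_unique _ _ (peval_series 1 csU (le_n 1))).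
    apply Series_le. apply term_upper. eexists; apply peval_series; lia.
Qed.

Lemma psum N : sum_n (fun k => INR k * P_R_eq k) N =
  sum_n (fun k => 1 - pp k) N - (INR N + 1) * (1 - pp N).
Proof.
  induction N.
  - rewrite !sum_O. simpl. match goal with |- ?a = ?b => change (@eq R a b) end. ring.
  - rewrite !sum_Sn. change (plus ?a ?b) with (a + b). rewrite IHN.
    match goal with |- ?a = ?b => change (@eq R a b) end.
    change (P_R_eq (S N)) with (P_R_le (S N) - P_R_le N). fold (pp (S N)) (pp N).
    rewrite S_INR. ring.
Qed.

Lemma bern N : 1 + INR N / 16 <= (17/16)^N.
Proof.
  induction N. simpl. lra. rewrite S_INR. simpl. pose proof (pos_INR N). nra.
Qed.

Lemma lin_geom N : (INR N + 1) * (8/9)^N <= 16 * (17/18)^N.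
Proof.
  pose proof (bern N). pose proof (xr_bounds N).
  replace (17/18) with (17/16 * (8/9)) by field. rewrite Rpow_mult_distr.
  assert (INR N + 1 <= 16 * (17/16)^N) by (pose proof (pos_INR N); lra). nra.
Qed.

Lemma tail0 : is_lim_seq (fun N => (INR N + 1) * (1 - pp N)) 0.
Proof.
  apply is_lim_seq_le_le with (u := fun _ => 0) (w := fun N => 17/9 * 16 * (17/18)^N).
  - intros N. pose proof (pp_le1 N). pose proof (pp_lin N). pose proof (lin_geom N). pose proof (pos_INR N).
    split. apply Rmult_le_pos; lra.
    assert ((INR N + 1) * (1 - pp N) <= (INR N + 1) * (17/9 * (8/9)^N)) by (apply Rmult_le_compat_l; lra). nra.
  - apply is_lim_seq_const.
  - pose proof (is_lim_seq_scal_l _ (17/9*16) _ (is_lim_seq_geom (17/18) ltac:(rewrite Rabs_pos_eq; lra))) as H.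
    simpl in H. rewrite Rmult_0_r in H. exact H.
Qed.

Lemma ER_series : is_series (fun n => INR n * P_R_eq n) ER.
Proof.
  assert (H1 : is_lim_seq (sum_n (fun k => 1 - pp k)) ER).
  { pose proof (Series_correct _ ex_series_pp) as H. exact H. }
  pose proof (is_lim_seq_minus' _ _ _ _ H1 tail0) as H2. rewrite Rminus_0_r in H2.
  apply (is_lim_seq_ext _ (sum_n (fun k => INR k * P_R_eq k))) in H2.
  - exact H2.
  - intros N. rewrite psum. reflexivity.
Qed.

Lemma finite1 : P_R_finite = 1.
Proof.
  unfold P_R_finite.
  assert (is_lim_seq P_R_le 1).
  { apply is_lim_seq_le_le with (u := fun N => 1 - 17/9 * (8/9)^N) (w := fun _ => 1).
    - intros N. pose proof (pp_le1 N). pose proof (pp_lin N). unfold pp in *. lra.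
    - pose proof (is_lim_seq_scal_l _ (17/9) _ (is_lim_seq_geom (8/9) ltac:(rewrite Rabs_pos_eq; lra))) as H.
      simpl in H. rewrite Rmult_0_r in H.
      pose proof (is_lim_seq_minus' _ _ _ _ (is_lim_seq_const 1) H) as H2. rewrite Rminus_0_r in H2. exact H2.
    - apply is_lim_seq_const. }
  rewrite (is_lim_seq_unique _ _ H). reflexivity.
Qed.

Theorem theorem3 :
  (forall n : nat,
      3/9 * alpha1 n + 4/9 * alpha1 n ^ 2 + 2/9 * alpha1 n ^ 3 <= P_R_le n /\
      P_R_le n <= 3/9 * alpha2 n + 4/9 * alpha2 n ^ 2 + 2/9 * alpha2 n ^ 3) /\
  (P_R_finite = 1 /\
   exists ER : R,
     is_series (fun n : nat => INR n * P_R_eq n) ER /\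
     6144/1000 <= ER <= 7448/1000).
Proof.
  split. apply part1. split. apply finite1. exists ER. split. apply ER_series. apply ER_bounds.
Qed.
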